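(* Let $\varphi:[0,\infty]\to[0,\infty]$ be a nonconstant continuous nondecreasing convex function such that $\int_{t_*}^{\infty}(t/\varphi(t))^{\alpha}dt<\infty$ for some $\alpha>0$ and some $t_*\in(t_0,\infty)$, where $t_0=\sup\{t:\varphi(t)=0\}$ ($t_0=0$ if $\varphi>0$ everywhere), and let $\tilde\alpha\in(\alpha,\infty)$. Then $\varphi=\psi\circ\tilde\varphi$ where $\psi,\tilde\varphi:[0,\infty]\to[0,\infty]$ are strictly convex, $\tilde\varphi\le\varphi$ on $[0,\infty]$, and $\int_{t_*}^{\infty}(t/\tilde\varphi(t))^{\tilde\alpha}dt<\infty$ for some $t_*>t_0$.
   Context: A function $g:[0,\infty]\to[0,\infty]$ is called strictly convex if it is nondecreasing, convex and $\lim_{t\to\infty}g(t)/t=\infty$. Continuity is in the topology of $[0,\infty]$. *)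

(* Defs.v *)
From Stdlib Require Import Reals.
Open Scope R_scope.

(* Extended reals; the space [0,oo] is { p : ER | ERnonneg p }. *)
Inductive ER : Type := Fin (x : R) | Inf.

Definition ERnonneg (p : ER) : Prop :=
  match p with Fin x => 0 <= x | Inf => True end.

Definition ERle (p q : ER) : Prop :=
  match p, q with
  | _, Inf => True
  | Inf, Fin _ => False
  | Fin x, Fin y => x <= y
  end.

Definition ERadd (p q : ER) : ER :=
  match p, q with Fin x, Fin y => Fin (x + y) | _, _ => Inf end.

(* scaling by a strictly positive real *)
Definition ERscale (l : R) (p : ER) : ER :=
  match p with Fin x => Fin (l * x) | Inf => Inf end.

Definition ERcomb (l : R) (p q : ER) : ER :=
  ERadd (ERscale l p) (ERscale (1 - l) q).

(* Homeomorphism [0,oo] -> [0,1] : x |-> x/(1+x), oo |-> 1.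
   Used to express the topology of [0,oo]. *)
Definition squash (p : ER) : R :=
  match p with Fin x => x / (1 + x) | Inf => 1 end.

Definition maps_nonneg (g : ER -> ER) : Prop :=
  forall p, ERnonneg p -> ERnonneg (g p).

Definition ER_continuous (g : ER -> ER) : Prop :=
  forall p, ERnonneg p -> forall eps, 0 < eps ->
    exists delta, 0 < delta /\
      forall q, ERnonneg q -> Rabs (squash q - squash p) < delta ->
        Rabs (squash (g q) - squash (g p)) < eps.

Definition ER_nondecreasing (g : ER -> ER) : Prop :=
  forall p q, ERnonneg p -> ERnonneg q -> ERle p q -> ERle (g p) (g q).

Definition ER_convex (g : ER -> ER) : Prop :=
  forall p q l, ERnonneg p -> ERnonneg q -> 0 < l < 1 ->
    ERle (g (ERcomb l p q)) (ERcomb l (g p) (g q)).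

Definition ER_nonconstant (g : ER -> ER) : Prop :=
  exists p q, ERnonneg p /\ ERnonneg q /\ g p <> g q.

Definition ER_superlinear (g : ER -> ER) : Prop :=
  forall M, exists T, 0 < T /\ forall t, T <= t -> ERle (Fin (M * t)) (g (Fin t)).

(* "strictly convex" in the sense of the paper *)
Definition strictly_convex (g : ER -> ER) : Prop :=
  maps_nonneg g /\ ER_nondecreasing g /\ ER_convex g /\ ER_superlinear g.

Definition is_t0 (g : ER -> ER) (t0 : R) : Prop :=
  let Z := fun t => 0 <= t /\ g (Fin t) = Fin 0 in
  is_lub Z t0 \/ ((forall t, ~ Z t) /\ t0 = 0).

(* the integrand (t / g(t))^a, with value 0 where g(t) = oo *)
Definition ratio_pow (g : ER -> ER) (a : R) (t : R) : R :=
  match g (Fin t) with Fin y => Rpower (t / y) a | Inf => 0 end.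

Definition improper_int_finite (f : R -> R) (a : R) : Prop :=
  (forall b, a <= b -> inhabited (Riemann_integrable f a b)) /\
  exists M, forall b (pr : Riemann_integrable f a b), a <= b -> RiemannInt pr <= M.

(* Main.v *)
Require Import Defs.
From Stdlib Require Import Reals Lra Lia Psatz ClassicalEpsilon Classical ZArith List.
From Stdlib Require Import RiemannInt_SF RiemannInt RList.
From Coquelicot Require Coquelicot.
Open Scope R_scope.

Module PMono.

Lemma piece_in (l : list R) (i : nat) a b :
  ordered_Rlist l -> pos_Rl l 0 = a -> pos_Rl l (pred (length l)) = b ->
  (i < pred (length l))%nat -> a <= pos_Rl l i /\ pos_Rl l (S i) <= b.
Proof.
  intros Ho H0 H1 Hi; split.
  - rewrite <- H0; apply RList_P5; auto. apply RList_P3. exists i; split; auto; lia.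
  - rewrite <- H1; apply RList_P7; auto. apply RList_P3. exists (S i); split; auto; lia.
Qed.

Definition sf_ext (f g : R -> R) (a b : R)
  (H : forall t, Rmin a b < t < Rmax a b -> f t = g t) (pr : IsStepFun f a b) :
  IsStepFun g a b.
Proof.
  destruct pr as [l [lf Hc]]. exists l. exists lf.
  destruct Hc as (Ho & H0 & H1 & Hl & Hk). repeat split; auto.
  intros i Hi x Hx. rewrite <- H. apply (Hk i Hi x Hx).
  destruct (piece_in l i _ _ Ho H0 H1 Hi). unfold open_interval in Hx. lra.
Defined.

Lemma sf_ext_int f g a b H pr :
  RiemannInt_SF (mkStepFun (sf_ext f g a b H pr)) = RiemannInt_SF (mkStepFun pr).
Proof.
  destruct pr as [l [lf Hc]]. unfold sf_ext. destruct Hc as (Ho & H0 & H1 & Hl & Hk).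
  reflexivity.
Qed.

Fixpoint Phi (f : R -> R) (h : R) (n : nat) (a : R) (t : R) : R :=
  match n with
  | O => f a
  | S n' => if Rlt_dec t (a + h) then f a else Phi f h n' (a + h) t
  end.

Fixpoint Psi (f : R -> R) (h : R) (n : nat) (a : R) (t : R) : R :=
  match n with
  | O => 0
  | S n' => if Rlt_dec t (a + h) then f a - f (a + h) else Psi f h n' (a + h) t
  end.

Lemma mono_step (f : R -> R) (h : R) (hpos : 0 < h) (n : nat) :
  forall a b, b = a + INR n * h ->
  (forall x y, a <= x -> x <= y -> y <= b -> f y <= f x) ->
  { pr1 : IsStepFun (Phi f h n a) a b &
  { pr2 : IsStepFun (Psi f h n a) a b |
    (forall t, a <= t <= b -> Rabs (f t - Phi f h n a t) <= Psi f h n a t) /\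
    RiemannInt_SF (mkStepFun pr2) = h * (f a - f b) } }.
Proof.
  induction n as [|n IH]; intros a b Hb Hmon.
  - simpl in Hb. replace b with a by lra.
    exists (StepFun_P4 a a (f a)). exists (StepFun_P4 a a 0). split.
    + intros t Ht. replace t with a by lra. simpl. rewrite Rminus_diag, Rabs_R0; lra.
    + etransitivity; [apply (StepFun_P18 a a 0)|]. ring.
  - rewrite S_INR in Hb.
    assert (Hb' : b = (a + h) + INR n * h) by lra.
    assert (Hn : 0 <= INR n) by apply pos_INR.
    assert (Hnh : 0 <= INR n * h) by (apply Rmult_le_pos; lra).
    destruct (IH (a + h) b Hb') as [p1 [p2 [Hbd Hint]]].
    { intros x y Hx Hxy Hy. apply Hmon; lra. }
    assert (E1 : forall t, Rmin a (a+h) < t < Rmax a (a+h) ->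
              fct_cte (f a) t = Phi f h (S n) a t).
    { intros t Ht. rewrite Rmin_left in Ht by lra. rewrite Rmax_right in Ht by lra.
      simpl. destruct (Rlt_dec t (a+h)); [reflexivity|lra]. }
    assert (E2 : forall t, Rmin (a+h) b < t < Rmax (a+h) b ->
              Phi f h n (a+h) t = Phi f h (S n) a t).
    { intros t Ht. rewrite Rmin_left in Ht by lra. rewrite Rmax_right in Ht by lra.
      simpl. destruct (Rlt_dec t (a+h)); [lra|reflexivity]. }
    assert (F1 : forall t, Rmin a (a+h) < t < Rmax a (a+h) ->
              fct_cte (f a - f (a+h)) t = Psi f h (S n) a t).
    { intros t Ht. rewrite Rmin_left in Ht by lra. rewrite Rmax_right in Ht by lra.
      simpl. destruct (Rlt_dec t (a+h)); [reflexivity|lra]. }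
    assert (F2 : forall t, Rmin (a+h) b < t < Rmax (a+h) b ->
              Psi f h n (a+h) t = Psi f h (S n) a t).
    { intros t Ht. rewrite Rmin_left in Ht by lra. rewrite Rmax_right in Ht by lra.
      simpl. destruct (Rlt_dec t (a+h)); [lra|reflexivity]. }
    pose (q1 := sf_ext _ _ _ _ E1 (StepFun_P4 a (a+h) (f a))).
    pose (q2 := sf_ext _ _ _ _ E2 p1).
    pose (r1 := sf_ext _ _ _ _ F1 (StepFun_P4 a (a+h) (f a - f (a+h)))).
    pose (r2 := sf_ext _ _ _ _ F2 p2).
    exists (StepFun_P46 q1 q2). exists (StepFun_P46 r1 r2). split.
    + intros t Ht. simpl. destruct (Rlt_dec t (a+h)) as [Hlt|Hge].
      * rewrite Rabs_left1.
        -- assert (f (a+h) <= f t) by (apply Hmon; lra). lra.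
        -- assert (f t <= f a) by (apply Hmon; lra). lra.
      * apply Hbd. lra.
    + rewrite <- (StepFun_P43 r1 r2). unfold r1, r2.
      rewrite !sf_ext_int, StepFun_P18, Hint. ring.
Qed.

Lemma mono_integrable (f : R -> R) (a b : R) :
  a <= b -> (forall x y, a <= x -> x <= y -> y <= b -> f y <= f x) ->
  Riemann_integrable f a b.
Proof.
  intros Hab Hmon. destruct (Req_EM_T a b) as [Heq|Hne].
  { subst. apply RiemannInt_P7. }
  assert (Hlt : a < b) by lra.
  assert (Hd : 0 <= f a - f b) by (assert (f b <= f a) by (apply Hmon; lra); lra).
  intros eps.
  assert (Hex : exists n : nat, (b - a) * (f a - f b) < eps * INR (S n)).
  { destruct (archimed ((b - a) * (f a - f b) / eps)) as [H1 _].
    destruct (Z_le_gt_dec (up ((b - a) * (f a - f b) / eps)) 0) as [Hz|Hz].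
    - exists O. simpl. pose proof (cond_pos eps).
      apply IZR_le in Hz.
      assert ((b - a) * (f a - f b) / eps < 0) by lra.
      assert ((b - a) * (f a - f b) < 0 * eps).
      { apply (Rmult_lt_reg_r (/ eps)). apply Rinv_0_lt_compat; lra.
        unfold Rdiv in *. lra. }
      lra.
    - exists (Z.to_nat (up ((b - a) * (f a - f b) / eps))).
      rewrite S_INR, INR_IZR_INZ, Z2Nat.id by lia.
      pose proof (cond_pos eps).
      assert ((b - a) * (f a - f b) = ((b - a) * (f a - f b) / eps) * eps) by (field; lra).
      nra. }
  apply constructive_indefinite_description in Hex. destruct Hex as [n Hn].
  pose (h := (b - a) / INR (S n)).
  assert (HS : 0 < INR (S n)) by (apply lt_0_INR; lia).
  assert (hpos : 0 < h) by (unfold h; apply Rdiv_lt_0_compat; lra).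
  assert (Hb : b = a + INR (S n) * h) by (unfold h; field; lra).
  destruct (mono_step f h hpos (S n) a b Hb Hmon) as [p1 [p2 [Hbd Hint]]].
  exists (mkStepFun p1). exists (mkStepFun p2). split.
  - intros t Ht. rewrite Rmin_left, Rmax_right in Ht by lra. apply Hbd; lra.
  - rewrite Hint. rewrite Rabs_right.
    + unfold h. apply (Rmult_lt_reg_r (INR (S n))); auto.
      replace ((b - a) / INR (S n) * (f a - f b) * INR (S n)) with ((b - a) * (f a - f b))
        by (field; lra). lra.
    + apply Rle_ge. apply Rmult_le_pos; lra.
Qed.

End PMono.
Import PMono.

Module P1.

Definition Rsup (E : R -> Prop) : R :=
  match excluded_middle_informative (bound E /\ exists x, E x) with
  | left H => proj1_sig (completeness E (proj1 H) (proj2 H))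
  | right _ => 0
  end.

Lemma Rsup_lub E : bound E -> (exists x, E x) -> is_lub E (Rsup E).
Proof.
  intros Hb He. unfold Rsup.
  destruct (excluded_middle_informative _) as [H|H].
  - apply (proj2_sig (completeness E (proj1 H) (proj2 H))).
  - exfalso; apply H; auto.
Qed.

Lemma Rsup_ub E y : bound E -> E y -> y <= Rsup E.
Proof. intros Hb Hy. apply (Rsup_lub E Hb (ex_intro _ y Hy)). auto. Qed.

Lemma Rsup_le E m : (exists x, E x) -> (forall y, E y -> y <= m) -> Rsup E <= m.
Proof.
  intros He Hm. assert (Hb : bound E) by (exists m; exact Hm).
  apply (Rsup_lub E Hb He). exact Hm.
Qed.

Definition Rinf (E : R -> Prop) : R := - Rsup (fun y => E (- y)).

Lemma Rinf_le E m y0 : (forall y, E y -> m <= y) -> E y0 -> Rinf E <= y0.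
Proof.
  intros Hm Hy. unfold Rinf.
  assert (- y0 <= Rsup (fun y => E (- y))).
  { apply Rsup_ub. exists (- m). intros y Hy'. specialize (Hm _ Hy'). lra.
    rewrite Ropp_involutive. auto. }
  lra.
Qed.

Lemma Rinf_ge E m : (exists y, E y) -> (forall y, E y -> m <= y) -> m <= Rinf E.
Proof.
  intros [y0 Hy0] Hm. unfold Rinf.
  assert (Rsup (fun y => E (- y)) <= - m).
  { apply Rsup_le. exists (- y0). rewrite Ropp_involutive; auto.
    intros y Hy. specialize (Hm _ Hy). lra. }
  lra.
Qed.

Lemma div_le_div A B d d' : 0 < d -> 0 < d' -> A * d' <= B * d -> A / d <= B / d'.
Proof.
  intros Hd Hd' H. apply (Rmult_le_reg_r (d * d')). nra.
  replace (A / d * (d * d')) with (A * d') by (field; lra).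
  replace (B / d' * (d * d')) with (B * d) by (field; lra). lra.
Qed.

Lemma amgm th y : 0 < th < 1 -> 0 < y -> Rpower y th <= th * y + (1 - th).
Proof.
  intros Hth Hy. unfold Rpower. set (a := ln y).
  assert (Ey : y = exp a) by (unfold a; rewrite exp_ln; auto).
  rewrite Ey.
  assert (H1 : exp a = exp (th * a) * exp ((1 - th) * a)).
  { rewrite <- exp_plus. f_equal. ring. }
  assert (H2 : 1 = exp (th * a) * exp (- (th * a))).
  { rewrite <- exp_plus. replace (th * a + - (th * a)) with 0 by ring. rewrite exp_0; auto. }
  pose proof (exp_ineq1_le ((1 - th) * a)) as I1.
  pose proof (exp_ineq1_le (- (th * a))) as I2.
  pose proof (exp_pos (th * a)) as P.
  assert (exp (th * a) * (1 + (1 - th) * a) <= exp (th * a) * exp ((1 - th) * a))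
    by (apply Rmult_le_compat_l; lra).
  assert (exp (th * a) * (1 + - (th * a)) <= exp (th * a) * exp (- (th * a)))
    by (apply Rmult_le_compat_l; lra).
  nra.
Qed.

Lemma tangent th s x : 0 < th < 1 -> 0 < s -> 0 < x ->
  Rpower x th <= Rpower s th + th * (Rpower s th / s) * (x - s).
Proof.
  intros Hth Hs Hx.
  assert (E : Rpower x th = Rpower s th * Rpower (x / s) th).
  { rewrite Rpower_mult_distr; try (apply Rdiv_lt_0_compat; lra); auto.
    f_equal. field. lra. }
  rewrite E. pose proof (amgm th (x / s) Hth (Rdiv_lt_0_compat _ _ Hx Hs)).
  assert (P : 0 < Rpower s th) by (unfold Rpower; apply exp_pos).
  apply Rle_trans with (Rpower s th * (th * (x / s) + (1 - th))).
  - apply Rmult_le_compat_l; lra.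
  - right. field. lra.
Qed.

Lemma Rpower_1_base th : Rpower 1 th = 1.
Proof. unfold Rpower. rewrite ln_1, Rmult_0_r, exp_0. auto. Qed.

Lemma Rpower_pos x y : 0 < Rpower x y.
Proof. unfold Rpower; apply exp_pos. Qed.

End P1.
Import P1.

Module P2.

Section Basic.
Variable phi : ER -> ER.
Hypothesis Hnn : maps_nonneg phi.
Hypothesis Hmon : ER_nondecreasing phi.
Hypothesis Hconv : ER_convex phi.

Definition fin t := exists y, phi (Fin t) = Fin y.
Definition fv t := match phi (Fin t) with Fin y => y | Inf => 0 end.

Lemma fin_eq t : fin t -> phi (Fin t) = Fin (fv t).
Proof. intros [y Hy]. unfold fv. rewrite Hy. auto. Qed.

Lemma f_nonneg t : 0 <= t -> 0 <= fv t.
Proof.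
  intros Ht. unfold fv. pose proof (Hnn (Fin t) Ht) as H.
  destruct (phi (Fin t)); simpl in *; lra.
Qed.

Lemma fin_down x y : 0 <= x -> x <= y -> fin y -> fin x.
Proof.
  intros Hx Hxy [z Hz]. pose proof (Hmon (Fin x) (Fin y) Hx ltac:(simpl; lra) Hxy) as H.
  rewrite Hz in H. destruct (phi (Fin x)) eqn:E; simpl in H; [exists x0; auto| contradiction].
Qed.

Lemma f_mono x y : 0 <= x -> x <= y -> fin y -> fv x <= fv y.
Proof.
  intros Hx Hxy Hy. pose proof (fin_down x y Hx Hxy Hy) as Hfx.
  pose proof (Hmon (Fin x) (Fin y) Hx ltac:(simpl; lra) Hxy) as H.
  rewrite (fin_eq _ Hy), (fin_eq _ Hfx) in H. exact H.
Qed.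

Lemma f_conv x y l : 0 <= x -> 0 <= y -> fin x -> fin y -> 0 < l < 1 ->
  fv (l * x + (1 - l) * y) <= l * fv x + (1 - l) * fv y.
Proof.
  intros Hx Hy Hfx Hfy Hl. pose proof (Hconv (Fin x) (Fin y) l Hx Hy Hl) as H.
  unfold ERcomb in H. simpl in H. rewrite (fin_eq _ Hfx), (fin_eq _ Hfy) in H.
  simpl in H. unfold fv. destruct (phi (Fin (l * x + (1 - l) * y))); simpl in H.
  - exact H.
  - contradiction.
Qed.

Definition sl x y := (fv y - fv x) / (y - x).

Lemma sl_mul x y : (y - x) * sl x y = fv y - fv x.
Proof.
  unfold sl. destruct (Req_dec x y) as [E|E].
  - subst. rewrite !Rminus_diag. ring.
  - field. lra.
Qed.

Lemma sl_nonneg x y : 0 <= x -> x < y -> fin y -> 0 <= sl x y.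
Proof.
  intros. unfold sl. apply Rle_mult_inv_pos; [|lra].
  assert (fv x <= fv y) by (apply f_mono; auto; lra). lra.
Qed.

Lemma slope3 x y z : 0 <= x -> x < y -> y < z -> fin z ->
  sl x y <= sl x z /\ sl x z <= sl y z.
Proof.
  intros Hx Hxy Hyz Hz.
  assert (Hfx : fin x) by (apply (fin_down x z); auto; lra).
  set (l := (z - y) / (z - x)).
  assert (Hl : 0 < l < 1).
  { unfold l; split. apply Rdiv_lt_0_compat; lra.
    apply (Rmult_lt_reg_r (z - x)); [lra|]. unfold Rdiv. rewrite Rmult_assoc, Rinv_l; lra. }
  assert (Ey : l * x + (1 - l) * z = y) by (unfold l; field; lra).
  pose proof (f_conv x z l Hx ltac:(lra) Hfx Hz Hl) as C. rewrite Ey in C.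
  assert (El : l * (z - x) = z - y) by (unfold l; field; lra).
  split; unfold sl; apply div_le_div; try lra.
  -
    assert (fv y - fv x <= (1 - l) * (fv z - fv x)) by lra.
    assert ((1 - l) * (z - x) = y - x) by lra.
    nra.
  - assert (l * (fv z - fv x) <= fv z - fv y) by lra.
    nra.
Qed.

Lemma sl_incr x y p q : 0 <= x -> x < y -> x <= p -> p < q -> y <= q -> fin q ->
  sl x y <= sl p q.
Proof.
  intros Hx Hxy Hxp Hpq Hyq Hq.
  apply Rle_trans with (sl x q).
  - destruct (Req_dec y q) as [E|E]; [subst; lra|].
    apply (slope3 x y q); auto; lra.
  - destruct (Req_dec x p) as [E|E]; [subst; lra|].
    apply (slope3 x p q); auto; lra.
Qed.

End Basic.

End P2.
Import P2.

Module P3.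

Section KJ.
Variable th : R.
Hypothesis Hth : 0 < th < 1.

Definition kf m := if Rle_dec m 1 then m else Rpower m th.
Definition jf m := if Rle_dec m 1 then 1 else Rpower m (1 - th).
Definition ks m := if Rle_dec m 1 then 1 else th * (Rpower m th / m).

Lemma kf_nonneg m : 0 <= m -> 0 <= kf m.
Proof. intros; unfold kf; destruct (Rle_dec m 1); [lra| pose proof (Rpower_pos m th); lra]. Qed.

Lemma Rpower_mono_e m e1 e2 : 1 <= m -> e1 <= e2 -> Rpower m e1 <= Rpower m e2.
Proof.
  intros Hm He. unfold Rpower. 
  assert (0 <= ln m) by (rewrite <- ln_1; destruct (Req_dec m 1); [subst; lra| left; apply ln_increasing; lra]).
  destruct (Req_dec (e1 * ln m) (e2 * ln m)) as [E|E]; [rewrite E; lra|].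
  left; apply exp_increasing. nra.
Qed.

Lemma Rpower_ge1 m e : 1 <= m -> 0 <= e -> 1 <= Rpower m e.
Proof.
  intros Hm He. pose proof (Rpower_mono_e m 0 e Hm He). unfold Rpower in *.
  rewrite Rmult_0_l, exp_0 in H. auto.
Qed.

Lemma Rpower_le_self m : 1 <= m -> Rpower m th <= m.
Proof.
  intros Hm. pose proof (Rpower_mono_e m th 1 Hm ltac:(lra)).
  rewrite Rpower_1 in H by lra. auto.
Qed.

Lemma kf_le m : 0 <= m -> kf m <= m.
Proof.
  intros; unfold kf; destruct (Rle_dec m 1); [lra|]. apply Rpower_le_self; lra.
Qed.

Lemma kf_mono x y : 0 <= x -> x <= y -> kf x <= kf y.
Proof.
  intros Hx Hxy. unfold kf. destruct (Rle_dec x 1); destruct (Rle_dec y 1).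
  - lra.
  - apply Rle_trans with 1; [lra|]. apply Rpower_ge1; lra.
  - lra.
  - destruct (Req_dec x y); [subst; lra|]. apply Rle_Rpower_l; lra.
Qed.

Lemma jf_ge1 m : 1 <= jf m.
Proof. unfold jf; destruct (Rle_dec m 1); [lra|]. apply Rpower_ge1; lra. Qed.

Lemma jf_mono x y : x <= y -> jf x <= jf y.
Proof.
  intros Hxy. unfold jf. destruct (Rle_dec x 1); destruct (Rle_dec y 1).
  - lra.
  - apply Rpower_ge1; lra.
  - lra.
  - destruct (Req_dec x y); [subst; lra|]. apply Rle_Rpower_l; lra.
Qed.

Lemma kj m : 0 <= m -> kf m * jf m = m.
Proof.
  intros Hm. unfold kf, jf. destruct (Rle_dec m 1); [ring|].
  rewrite <- Rpower_plus. replace (th + (1 - th)) with 1 by ring.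
  apply Rpower_1. lra.
Qed.

Lemma kf_tangent s x : 0 <= s -> 0 <= x -> kf x <= kf s + ks s * (x - s).
Proof.
  intros Hs Hx. unfold kf at 2. unfold ks. destruct (Rle_dec s 1) as [Hs1|Hs1].
  - pose proof (kf_le x Hx). lra.
  - assert (Hs' : 0 < s) by lra.
    pose proof (Rpower_pos s th) as P.
    unfold kf. destruct (Rle_dec x 1) as [Hx1|Hx1].
    + pose proof (tangent th s 1 Hth Hs' ltac:(lra)) as T1. rewrite Rpower_1_base in T1.
      assert (E : th * (Rpower s th / s) * s = th * Rpower s th) by (field; lra).
      assert (0 <= Rpower s th + th * (Rpower s th / s) * (0 - s)) by nra.
      nra.
    + apply tangent; auto; lra.
Qed.

Lemma kf_unbounded X : exists B, 1 <= B /\ X <= kf B.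
Proof.
  exists (Rpower (Rmax 1 X) (/ th)). 
  assert (H1 : 1 <= Rmax 1 X) by apply Rmax_l.
  assert (HB : 1 <= Rpower (Rmax 1 X) (/ th)).
  { apply Rpower_ge1; auto. left; apply Rinv_0_lt_compat; lra. }
  split; auto. unfold kf. destruct (Rle_dec _ 1) as [E|E].
  - assert (Rpower (Rmax 1 X) (/ th) = 1) by lra.
    assert (Rmax 1 X <= 1).
    { destruct (Req_dec (Rmax 1 X) 1) as [E2|E2]; [lra|].
      assert (Rpower (Rmax 1 X) 0 < Rpower (Rmax 1 X) (/ th)).
      { unfold Rpower. apply exp_increasing. rewrite Rmult_0_l.
        apply Rmult_lt_0_compat. apply Rinv_0_lt_compat; lra.
        rewrite <- ln_1. apply ln_increasing; lra. }
      rewrite Rpower_O in H0 by lra. lra. }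
    pose proof (Rmax_r 1 X). lra.
  - rewrite Rpower_mult. replace (/ th * th) with 1 by (field; lra).
    rewrite Rpower_1 by lra. apply Rmax_r.
Qed.

Lemma jf_unbounded X : exists B, 1 <= B /\ X <= jf B.
Proof.
  assert (Hth' : 0 < 1 - th) by lra.
  exists (Rpower (Rmax 2 X) (/ (1 - th))).
  assert (H1 : 2 <= Rmax 2 X) by apply Rmax_l.
  assert (HB : 1 < Rpower (Rmax 2 X) (/ (1 - th))).
  { assert (Hp : 0 < / (1 - th) * ln (Rmax 2 X)).
    { apply Rmult_lt_0_compat. apply Rinv_0_lt_compat; lra.
      rewrite <- ln_1. apply ln_increasing; lra. }
    pose proof (exp_increasing 0 _ Hp) as He. rewrite exp_0 in He. unfold Rpower. lra. }
  split; [lra|]. unfold jf. destruct (Rle_dec _ 1) as [E|E]; [lra|].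
  rewrite Rpower_mult. replace (/ (1 - th) * (1 - th)) with 1 by (field; lra).
  rewrite Rpower_1 by lra. pose proof (Rmax_r 2 X). lra.
Qed.

End KJ.

End P3.
Import P3.

Module P4.

Section Parts.
Variable phi : ER -> ER.
Hypothesis Hnn : maps_nonneg phi.
Hypothesis Hmon : ER_nondecreasing phi.
Hypothesis Hconv : ER_convex phi.
Variable th : R.
Hypothesis Hth : 0 < th < 1.

Local Notation fv := (fv phi).
Local Notation fin := (fin phi).
Local Notation sl := (sl phi).
Local Notation kf := (kf th).
Local Notation jf := (jf th).

Ltac nlra := repeat match goal with H : ?a <> ?b |- _ =>
  let H' := fresh in destruct (Rtotal_order a b) as [H'|[H'|H']]; [|contradiction|]; clear H end; lra.

Lemma conc2 a c b : 0 <= a -> a <= c -> c <= b -> fin b ->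
  (c - a) * kf (sl a c) + (b - c) * kf (sl c b) <= (b - a) * kf (sl a b).
Proof.
  intros Ha Hac Hcb Hb.
  assert (Hc : fin c) by (apply (fin_down phi Hmon c b); auto; nlra).
  assert (N : forall x y, 0 <= x -> x <= y -> fin y -> 0 <= sl x y).
  { intros x y Hx Hxy Hy. destruct (Req_dec x y) as [E|E].
    - subst. unfold P2.sl. rewrite !Rminus_diag. unfold Rdiv. rewrite Rmult_0_l. lra.
    - apply sl_nonneg; auto; nlra. }
  set (s := sl a b).
  assert (Hs : 0 <= s) by (apply N; auto; nlra).
  pose proof (kf_tangent th Hth s (sl a c) Hs (N a c Ha Hac Hc)) as T1.
  pose proof (kf_tangent th Hth s (sl c b) Hs (N c b ltac:(nlra) Hcb Hb)) as T2.
  pose proof (sl_mul phi a c). pose proof (sl_mul phi c b). pose proof (sl_mul phi a b).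
  fold s in H1.
  assert ((c - a) * kf (sl a c) <= (c - a) * (kf s + ks th s * (sl a c - s)))
    by (apply Rmult_le_compat_l; nlra).
  assert ((b - c) * kf (sl c b) <= (b - c) * (kf s + ks th s * (sl c b - s)))
    by (apply Rmult_le_compat_l; nlra).
  assert (E : (c - a) * (kf s + ks th s * (sl a c - s)) + (b - c) * (kf s + ks th s * (sl c b - s))
     = (b - a) * kf s + ks th s * ((c - a) * sl a c + (b - c) * sl c b - (b - a) * s)) by ring.
  assert (E2 : (c - a) * sl a c + (b - c) * sl c b - (b - a) * s = 0) by lra.
  rewrite E2, Rmult_0_r, Rplus_0_r in E. lra.
Qed.

Fixpoint valid (a : R) (l : list R) (b : R) : Prop :=
  match l with nil => a <= b | x :: l' => a <= x /\ valid x l' b end.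

Fixpoint Ssum (a : R) (l : list R) (b : R) : R :=
  match l with
  | nil => (b - a) * kf (sl a b)
  | x :: l' => (x - a) * kf (sl a x) + Ssum x l' b
  end.

Lemma valid_le a l b : valid a l b -> a <= b.
Proof.
  revert a; induction l as [|x l IH]; simpl; intros a H; [nlra|].
  destruct H as [H1 H2]. specialize (IH _ H2). lra.
Qed.

Lemma concat_valid a l1 c l2 b : valid a l1 c -> valid c l2 b ->
  valid a (l1 ++ c :: l2) b /\ Ssum a (l1 ++ c :: l2) b = Ssum a l1 c + Ssum c l2 b.
Proof.
  revert a; induction l1 as [|x l1 IH]; simpl; intros a H1 H2.
  - split; auto.
  - destruct H1 as [Hx Hv]. destruct (IH x Hv H2) as [IH1 IH2]. split; auto.
    rewrite IH2. ring.
Qed.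

Lemma refine a l b c : 0 <= a -> fin b -> valid a l b -> a <= c -> c <= b ->
  exists l1 l2, valid a l1 c /\ valid c l2 b /\ Ssum a l1 c + Ssum c l2 b <= Ssum a l b.
Proof.
  revert a; induction l as [|x l IH]; simpl; intros a Ha Hb Hv Hac Hcb.
  - exists nil, nil. simpl. repeat split; auto. apply conc2; auto.
  - destruct Hv as [Hax Hv]. pose proof (valid_le _ _ _ Hv) as Hxb.
    destruct (Rle_dec c x) as [Hcx|Hcx].
    + exists nil, (x :: l). simpl. repeat split; auto.
      pose proof (conc2 a c x Ha Hac Hcx ltac:(apply (fin_down phi Hmon x b); auto; nlra)).
      lra.
    + destruct (IH x ltac:(nlra) Hb Hv ltac:(nlra) Hcb) as [l1 [l2 [V1 [V2 S]]]].
      exists (x :: l1), l2. simpl. repeat split; auto. lra.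
Qed.

Lemma valid_in a l b : valid a l b -> forall x, In x l -> a <= x <= b.
Proof.
  revert a; induction l as [|y l IH]; simpl; intros a H x Hx; [contradiction|].
  destruct H as [H1 H2]. pose proof (valid_le _ _ _ H2).
  destruct Hx as [E|Hx]; [subst; nlra|]. specialize (IH _ H2 x Hx). lra.
Qed.

Lemma low_L a l b L : 0 <= L -> valid a l b ->
  (forall x y, a <= x -> x < y -> y <= b -> L <= sl x y) ->
  (b - a) * kf L <= Ssum a l b.
Proof.
  intros HL. revert a; induction l as [|x l IH]; simpl; intros a Hv Hs.
  - destruct (Req_dec a b) as [E|E]; [subst; rewrite Rminus_diag; nlra|].
    apply Rmult_le_compat_l; [nlra|]. apply kf_mono; auto. apply Hs; nlra.
  - destruct Hv as [Hax Hv]. pose proof (valid_le _ _ _ Hv).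
    assert (IH' := IH x Hv ltac:(intros; apply Hs; nlra)).
    assert ((x - a) * kf L <= (x - a) * kf (sl a x)).
    { destruct (Req_dec a x) as [E|E]; [subst; rewrite Rminus_diag; nlra|].
      apply Rmult_le_compat_l; [nlra|]. apply kf_mono; auto. apply Hs; nlra. }
    nra.
Qed.

Lemma low_U a l b U : 0 <= a -> fin b -> valid a l b ->
  (forall x y, a <= x -> x < y -> y <= b -> sl x y <= U) ->
  (fv b - fv a) / jf U <= Ssum a l b.
Proof.
  intros Ha Hb.
  assert (Piece : forall x y, 0 <= x -> x <= y -> y <= b ->
            (x < y -> sl x y <= U) ->
            (fv y - fv x) / jf U <= (y - x) * kf (sl x y)).
  { intros x y Hx Hxy Hy Hs. pose proof (jf_ge1 th Hth U) as J.
    destruct (Req_dec x y) as [E|E].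
    - subst. rewrite !Rminus_diag. unfold Rdiv; nlra.
    - assert (Hsl : 0 <= sl x y) by (apply sl_nonneg; auto; try nlra;
        apply (fin_down phi Hmon y b); auto; nlra).
      pose proof (kj th (sl x y) Hsl) as KJ.
      pose proof (jf_ge1 th Hth (sl x y)) as J2.
      pose proof (jf_mono th Hth _ _ (Hs ltac:(nlra))) as JM.
      pose proof (kf_nonneg th _ Hsl) as KN.
      rewrite <- (sl_mul phi x y). apply (Rmult_le_reg_r (jf U)); [nlra|].
      unfold Rdiv. rewrite Rmult_assoc, Rinv_l by nlra. rewrite Rmult_1_r.
      rewrite <- KJ at 1.
      assert (kf (sl x y) * jf (sl x y) <= kf (sl x y) * jf U) by (apply Rmult_le_compat_l; nlra).
      assert (0 <= y - x) by nlra.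
      assert ((y - x) * (kf (sl x y) * jf (sl x y)) <= (y - x) * (kf (sl x y) * jf U))
        by (apply Rmult_le_compat_l; nlra).
      lra. }
  revert a Ha; induction l as [|x l IH]; simpl; intros a Ha Hv Hs.
  - apply Piece; auto; try nlra. intros; apply Hs; nlra.
  - destruct Hv as [Hax Hv]. pose proof (valid_le _ _ _ Hv).
    pose proof (Piece a x ltac:(nlra) Hax H ltac:(intros; apply Hs; nlra)).
    pose proof (IH x ltac:(nlra) Hv ltac:(intros; apply Hs; nlra)).
    replace ((fv b - fv a) / jf U) with ((fv x - fv a) / jf U + (fv b - fv x) / jf U)
      by (field; pose proof (jf_ge1 th Hth U); nlra).
    lra.
Qed.

Lemma Ssum_nonneg a l b : 0 <= a -> fin b -> valid a l b -> 0 <= Ssum a l b.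
Proof.
  intros Ha Hb Hv. pose proof (low_L a l b 0 ltac:(nlra) Hv) as H.
  assert (kf 0 = 0) by (unfold P3.kf; destruct (Rle_dec 0 1); nlra).
  rewrite H0, Rmult_0_r in H. apply H.
  intros x y Hx Hxy Hy. pose proof (valid_le _ _ _ Hv).
  assert (fin y) by (apply (fin_down phi Hmon y b); auto; nlra).
  apply sl_nonneg; auto; nlra.
Qed.

Definition gr t := Rinf (fun y => exists l, valid 0 l t /\ y = Ssum 0 l t).

Lemma gr_le t l : 0 <= t -> fin t -> valid 0 l t -> gr t <= Ssum 0 l t.
Proof.
  intros Ht Hf Hv. apply (Rinf_le _ 0); [|exists l; auto].
  intros y [l' [Hv' E]]. subst. apply Ssum_nonneg; auto; nlra.
Qed.

Lemma gr_ge t m : 0 <= t -> (forall l, valid 0 l t -> m <= Ssum 0 l t) -> m <= gr t.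
Proof.
  intros Ht H. apply Rinf_ge.
  - exists (Ssum 0 nil t). exists nil. simpl; auto.
  - intros y [l [Hv E]]. subst; auto.
Qed.

Lemma gr_nonneg t : 0 <= t -> fin t -> 0 <= gr t.
Proof. intros. apply gr_ge; auto. intros. apply Ssum_nonneg; auto; nlra. Qed.

Lemma gr_up u t : 0 <= u -> u <= t -> fin t -> gr t <= gr u + (t - u) * kf (sl u t).
Proof.
  intros Hu Hut Ht.
  assert (gr t - (t - u) * kf (sl u t) <= gr u).
  { apply gr_ge; auto. intros l1 Hv1.
    destruct (concat_valid 0 l1 u nil t Hv1 Hut) as [V E].
    pose proof (gr_le t _ ltac:(nlra) Ht V). rewrite E in H. simpl in H. lra. }
  lra.
Qed.

Lemma gr_lowsplit u t Lo : 0 <= u -> u <= t -> fin t ->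
  (forall l2, valid u l2 t -> Lo <= Ssum u l2 t) -> gr u + Lo <= gr t.
Proof.
  intros Hu Hut Ht HL. apply gr_ge; [nlra|]. intros l Hv.
  destruct (refine 0 l t u ltac:(nlra) Ht Hv Hu Hut) as [l1 [l2 [V1 [V2 S]]]].
  pose proof (gr_ge u (Ssum 0 l1 u)) as _.
  assert (gr u <= Ssum 0 l1 u) by (apply gr_le; auto; apply (fin_down phi Hmon u t); auto).
  specialize (HL l2 V2). lra.
Qed.

Lemma gr_zero : gr 0 = 0.
Proof.
  apply Rle_antisym.
  - apply (Rinf_le _ 0).
    + intros y [l [Hv E]]. subst.
      assert (Z : forall l a, valid a l 0 -> 0 <= a -> Ssum a l 0 = 0 /\ a = 0).
      { induction l0 as [|x l0 IHl]; simpl; intros a Hv' Ha.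
        - split; [|nlra]. replace a with 0 by nlra. rewrite Rminus_diag; ring.
        - destruct Hv' as [H1 H2]. pose proof (valid_le _ _ _ H2).
          destruct (IHl x H2 ltac:(nlra)) as [E1 E2]. subst.
          replace a with 0 by nlra. rewrite E1, Rminus_diag. split; ring. }
      destruct (Z l 0 Hv ltac:(nlra)) as [E _]. lra.
    + exists nil. simpl. split; [nlra|]. rewrite Rminus_diag. ring.
  - apply gr_ge; [nlra|]. intros l Hv. 
    assert (Z : forall l a, valid a l 0 -> 0 <= a -> Ssum a l 0 = 0 /\ a = 0).
    { induction l0 as [|x l0 IHl]; simpl; intros a Hv' Ha.
      - split; [|nlra]. replace a with 0 by nlra. rewrite Rminus_diag; ring.
      - destruct Hv' as [H1 H2]. pose proof (valid_le _ _ _ H2).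
        destruct (IHl x H2 ltac:(nlra)) as [E1 E2]. subst.
        replace a with 0 by nlra. rewrite E1, Rminus_diag. split; ring. }
    destruct (Z l 0 Hv ltac:(nlra)) as [E _]. lra.
Qed.

Lemma gr_mono u t : 0 <= u -> u <= t -> fin t -> gr u <= gr t.
Proof.
  intros Hu Hut Ht. pose proof (gr_lowsplit u t 0 Hu Hut Ht) as H.
  assert (gr u + 0 <= gr t); [|nlra]. apply H. intros l2 Hv.
  apply Ssum_nonneg; auto.
Qed.

Lemma gr_le_f t : 0 <= t -> fin t -> gr t <= fv t.
Proof.
  intros Ht Hf. pose proof (gr_le t nil Ht Hf Ht) as H. simpl in H.
  destruct (Req_dec t 0) as [E|E].
  - subst. rewrite gr_zero. apply f_nonneg; auto; nlra.
  - assert (0 <= sl 0 t) by (apply sl_nonneg; auto; nlra).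
    pose proof (kf_le th Hth _ H0).
    assert ((t - 0) * kf (sl 0 t) <= (t - 0) * sl 0 t) by (apply Rmult_le_compat_l; nlra).
    rewrite sl_mul in H2. pose proof (f_nonneg phi Hnn 0 ltac:(nlra)). lra.
Qed.

Lemma gr_conv x w y : 0 <= x -> x <= w -> w <= y -> fin y ->
  (y - x) * gr w <= (y - w) * gr x + (w - x) * gr y.
Proof.
  intros Hx Hxw Hwy Hy.
  assert (Hw : fin w) by (apply (fin_down phi Hmon w y); auto; nlra).
  set (K := kf (sl x w)).
  pose proof (gr_up x w Hx Hxw Hw) as U. fold K in U.
  assert (L : gr w + (y - w) * K <= gr y).
  { apply gr_lowsplit; auto; try lra. intros l2 Hv. apply low_L; auto.
    - destruct (Req_dec x w) as [E|E].
      + subst. unfold P2.sl. rewrite !Rminus_diag. unfold Rdiv; nlra.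
      + apply sl_nonneg; auto; nlra.
    - intros p q Hp Hpq Hq. destruct (Req_dec x w) as [E|E].
      + subst. unfold P2.sl at 1. rewrite !Rminus_diag. unfold Rdiv. rewrite Rmult_0_l.
        apply sl_nonneg; auto; try lra. apply (fin_down phi Hmon q y); auto; nlra.
      + apply sl_incr; auto; try lra. apply (fin_down phi Hmon q y); auto; nlra. }
  assert ((y - w) * gr w <= (y - w) * (gr x + (w - x) * K)) by (apply Rmult_le_compat_l; nlra).
  assert ((w - x) * (gr w + (y - w) * K) <= (w - x) * gr y) by (apply Rmult_le_compat_l; nlra).
  nra.
Qed.

End Parts.

End P4.
Import P4.

Module P5.

Ltac nlra := repeat match goal with H : ?a <> ?b |- _ =>
  let H' := fresh in destruct (Rtotal_order a b) as [H'|[H'|H']]; [|contradiction|]; clear H end; lra.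

Lemma sq_fin x : 0 <= x -> squash (Fin x) = x / (1 + x).
Proof. reflexivity. Qed.

Lemma sq_lt1 x : 0 <= x -> x / (1 + x) < 1.
Proof. intros. apply (Rmult_lt_reg_r (1 + x)); [lra|]. unfold Rdiv.
  rewrite Rmult_assoc, Rinv_l by lra. lra. Qed.

Lemma sq_mono x y : 0 <= x -> x <= y -> x / (1 + x) <= y / (1 + y).
Proof. intros. apply div_le_div; nra. Qed.

Lemma sq_lip x y : 0 <= x -> 0 <= y -> Rabs (x / (1 + x) - y / (1 + y)) <= Rabs (x - y).
Proof.
  intros Hx Hy. replace (x / (1 + x) - y / (1 + y)) with ((x - y) / ((1 + x) * (1 + y)))
    by (field; lra).
  unfold Rdiv. rewrite Rabs_mult. rewrite (Rabs_right (/ _)).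
  2: { left. apply Rinv_0_lt_compat. nra. }
  assert (/ ((1 + x) * (1 + y)) <= 1).
  { rewrite <- Rinv_1. apply Rinv_le_contravar; nra. }
  pose proof (Rabs_pos (x - y)). nra.
Qed.

Section Facts.
Variable phi : ER -> ER.
Hypothesis Hnn : maps_nonneg phi.
Hypothesis Hnc : ER_nonconstant phi.
Hypothesis Hcont : ER_continuous phi.
Hypothesis Hmon : ER_nondecreasing phi.
Hypothesis Hconv : ER_convex phi.
Variables t0 alpha tstar : R.
Hypothesis Ht0 : is_t0 phi t0.
Hypothesis Halpha : 0 < alpha.
Hypothesis Htstar : t0 < tstar.
Hypothesis Hint : improper_int_finite (ratio_pow phi alpha) tstar.

Local Notation fv := (fv phi).
Local Notation fin := (fin phi).
Local Notation sl := (sl phi).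

Lemma not_fin t : ~ fin t -> phi (Fin t) = Inf.
Proof.
  intros H. destruct (phi (Fin t)) eqn:E; auto. exfalso; apply H; exists x; auto.
Qed.

Lemma fin0 : fin 0.
Proof.
  apply NNPP. intros H. apply not_fin in H.
  destruct Hnc as [p [q [Hp [Hq Hne]]]]. apply Hne.
  assert (A : forall r, ERnonneg r -> phi r = Inf).
  { intros r Hr. pose proof (Hmon (Fin 0) r ltac:(simpl; lra) Hr) as M.
    assert (ERle (Fin 0) r) by (destruct r; simpl in *; auto).
    specialize (M H0). rewrite H in M. destruct (phi r); simpl in M; [contradiction|auto]. }
  rewrite (A p Hp), (A q Hq). auto.
Qed.

Lemma t0_nonneg : 0 <= t0.
Proof.
  destruct Ht0 as [[Hub Hlub]|[_ E]]; [|lra].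
  apply NNPP; intro Hn.
  assert (forall t, ~ (0 <= t /\ phi (Fin t) = Fin 0)).
  { intros t [Ht Hz]. specialize (Hub t (conj Ht Hz)). lra. }
  (* no element; but lub of empty set impossible *)
  assert (Hb : is_upper_bound (fun t => 0 <= t /\ phi (Fin t) = Fin 0) (t0 - 1)).
  { intros t Ht. exfalso. apply (H t Ht). }
  specialize (Hlub _ Hb). lra.
Qed.

Lemma tstar_pos : 0 < tstar.
Proof. pose proof t0_nonneg. lra. Qed.

Lemma fv_pos t : t0 < t -> fin t -> 0 < fv t.
Proof.
  intros Ht Hf. assert (Ht' : 0 <= t) by (pose proof t0_nonneg; lra).
  pose proof (f_nonneg phi Hnn t Ht').
  destruct (Req_dec (fv t) 0) as [E|E]; [|nlra].
  exfalso. assert (Z : 0 <= t /\ phi (Fin t) = Fin 0) by (rewrite (fin_eq phi t Hf), E; auto).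
  destruct Ht0 as [[Hub _]|[Hn _]].
  - specialize (Hub t Z). lra.
  - apply (Hn t Z).
Qed.

Lemma fin_open t : 0 <= t -> fin t -> exists c, t < c /\ fin c.
Proof.
  intros Ht Hf. pose proof (f_nonneg phi Hnn t Ht) as Hft.
  set (eps := 1 - fv t / (1 + fv t)).
  assert (He : 0 < eps) by (unfold eps; pose proof (sq_lt1 _ Hft); lra).
  destruct (Hcont (Fin t) Ht eps He) as [d [Hd Hc]].
  exists (t + d / 2). split; [lra|].
  apply NNPP; intro Hn. apply not_fin in Hn.
  specialize (Hc (Fin (t + d / 2)) ltac:(simpl; lra)).
  rewrite Hn, (fin_eq phi t Hf) in Hc. simpl in Hc.
  assert (Rabs ((t + d / 2) / (1 + (t + d / 2)) - t / (1 + t)) < d).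
  { eapply Rle_lt_trans. apply sq_lip; lra. rewrite Rabs_right; lra. }
  specialize (Hc H). rewrite Rabs_right in Hc; [unfold eps in *; lra|].
  pose proof (sq_lt1 _ Hft). lra.
Qed.

Lemma slopes_unbounded B : exists u, 0 < u /\ fin u /\ B * u <= fv u - fv 0.
Proof.
  apply NNPP; intro Hn.
  assert (A : forall u, 0 < u -> fin u -> fv u - fv 0 < Rmax B 1 * u).
  { intros u Hu Hf. apply Rnot_le_lt. intro C. apply Hn. exists u. repeat split; auto.
    pose proof (Rmax_l B 1). nra. }
  clear Hn. set (B' := Rmax B 1). assert (HB' : 1 <= B') by apply Rmax_r.
  fold B' in A. pose proof fin0 as F0. pose proof (f_nonneg phi Hnn 0 ltac:(lra)) as F0p.
  destruct (classic (forall t, 0 <= t -> fin t)) as [All|NAll].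
  -
    destruct Hint as [Hi [M HM]].
    pose proof tstar_pos as Htp.
    set (C := fv 0 / tstar + B').
    assert (HC : 0 < C) by (unfold C; assert (0 <= fv 0 / tstar) by (apply Rle_mult_inv_pos; lra); lra).
    set (c := Rpower (/ C) alpha).
    assert (Hc : 0 < c) by apply Rpower_pos.
    set (b := tstar + (Rabs M + 1) / c).
    assert (Hb : tstar <= b).
    { unfold b. assert (0 < (Rabs M + 1) / c) by (apply Rdiv_lt_0_compat; pose proof (Rabs_pos M); lra). lra. }
    destruct (Hi b Hb) as [pr].
    specialize (HM b pr Hb).
    assert (Low : c * (b - tstar) <= RiemannInt pr).
    { rewrite <- (RiemannInt_P15 (RiemannInt_P14 tstar b c)).
      apply RiemannInt_P19; auto. intros x [Hx1 Hx2]. unfold fct_cte, ratio_pow.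
      assert (Hfx : fin x) by (apply All; lra).
      rewrite (fin_eq phi x Hfx). apply Rle_Rpower_l; [lra|]. split; [apply Rinv_0_lt_compat; lra|].
      assert (Pos : 0 < fv x) by (apply fv_pos; auto; lra).
      assert (fv x < C * x).
      { pose proof (A x ltac:(lra) Hfx). unfold C.
        assert (fv 0 <= fv 0 / tstar * x).
        { unfold Rdiv. rewrite Rmult_assoc. rewrite <- (Rmult_1_r (fv 0)) at 1.
          apply Rmult_le_compat_l; auto. apply (Rmult_le_reg_l tstar); [lra|].
          rewrite <- Rmult_assoc, Rinv_r; lra. }
        nra. }
      apply (Rmult_le_reg_r (C * fv x)). nra.
      replace (/ C * (C * fv x)) with (fv x) by (field; lra).
      replace (x / fv x * (C * fv x)) with (C * x) by (field; lra). lra. }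
    assert (c * (b - tstar) = Rabs M + 1) by (unfold b; field; lra).
    pose proof (Rle_abs M). lra.
  - assert (Ex : exists T, 0 <= T /\ ~ fin T).
    { apply NNPP; intro H. apply NAll. intros t Ht. apply NNPP; intro Hf. apply H; eauto. }
    destruct Ex as [T [HT HnT]].
    set (E := fun t => 0 <= t /\ fin t).
    assert (Eb : bound E).
    { exists T. intros t [Ht Hf]. apply Rnot_lt_le; intro C. apply HnT.
      apply (fin_down phi Hmon T t); auto; lra. }
    assert (Ene : exists x, E x) by (exists 0; split; [lra|auto]).
    pose proof (Rsup_lub E Eb Ene) as [Hub Hlub].
    set (b := Rsup E) in *.
    assert (Hb0 : 0 <= b) by (apply Hub; split; [lra|auto]).
    destruct (classic (fin b)) as [Fb|NFb].
    + destruct (fin_open b Hb0 Fb) as [c [Hbc Fc]].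
      assert (c <= b) by (apply Hub; split; auto; lra). lra.
    + assert (Hbpos : 0 < b).
      { destruct (Req_dec b 0) as [Z|Z]; [|nlra]. subst. rewrite Z in NFb. contradiction. }
      set (K := fv 0 + B' * b).
      assert (HK : 0 <= K) by (unfold K; nra).
      set (eps := 1 - K / (1 + K)).
      assert (He : 0 < eps) by (unfold eps; pose proof (sq_lt1 _ HK); lra).
      destruct (Hcont (Fin b) ltac:(simpl; lra) eps He) as [d [Hd Hc]].
      set (h := Rmin d b / 2).
      assert (Hh : 0 < h /\ h < d /\ h <= b / 2).
      { unfold h. pose proof (Rmin_l d b). pose proof (Rmin_r d b).
        pose proof (Rmin_glb_lt d b 0 Hd Hbpos). lra. }
      destruct Hh as [Hh1 [Hh2 Hh3]].
      set (q := b - h).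
      assert (Fq : fin q).
      { apply NNPP; intro Nq. assert (is_upper_bound E q).
        { intros t [Ht Hf]. apply Rnot_lt_le; intro C. apply Nq.
          apply (fin_down phi Hmon q t); auto; unfold q in *; lra. }
        specialize (Hlub q H). unfold q in *. lra. }
      specialize (Hc (Fin q) ltac:(simpl; unfold q in *; lra)).
      rewrite (not_fin b NFb), (fin_eq phi q Fq) in Hc. simpl in Hc.
      assert (Rabs (q / (1 + q) - b / (1 + b)) < d).
      { eapply Rle_lt_trans. apply sq_lip; unfold q in *; lra. unfold q.
        rewrite Rabs_left; lra. }
      specialize (Hc H).
      assert (fv q - fv 0 < B' * q) by (apply A; auto; unfold q in *; lra).
      assert (fv q <= K) by (unfold K, q in *; nra).
      pose proof (f_nonneg phi Hnn q ltac:(unfold q in *; lra)).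
      pose proof (sq_mono _ _ H2 H1).
      rewrite Rabs_left in Hc; [unfold eps in *; lra|].
      pose proof (sq_lt1 K HK). lra.
Qed.

Lemma slopes_far B : exists u, 0 < u /\ fin u /\ forall t, u <= t -> fin t -> B * t <= fv t - fv 0.
Proof.
  destruct (slopes_unbounded B) as [u [Hu [Fu Hb]]]. exists u; repeat split; auto.
  intros t Hut Ft.
  assert (sl 0 u <= sl 0 t).
  { destruct (Req_dec u t) as [E|E]; [subst; lra|]. apply sl_incr; auto; nlra. }
  pose proof (sl_mul phi 0 u). pose proof (sl_mul phi 0 t).
  assert (B <= sl 0 u).
  { apply (Rmult_le_reg_l u); [lra|]. rewrite Rminus_0_r in H0. lra. }
  rewrite Rminus_0_r in H1. 
  assert (B * t <= sl 0 t * t) by (apply Rmult_le_compat_r; lra). lra.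
Qed.

Lemma phi_Inf : phi Inf = Inf.
Proof.
  destruct (classic (forall t, 0 <= t -> fin t)) as [All|NAll].
  - destruct (phi Inf) eqn:EI; auto. exfalso.
    destruct (slopes_far 1) as [u [Hu [Fu Hs]]].
    pose proof (f_nonneg phi Hnn 0 ltac:(lra)).
    set (t := u + Rabs x + 1).
    pose proof (Rabs_pos x).
    assert (Ft : fin t) by (apply All; unfold t; lra).
    specialize (Hs t ltac:(unfold t; lra) Ft).
    pose proof (Hmon (Fin t) Inf ltac:(simpl; unfold t; lra) I I) as M.
    rewrite EI, (fin_eq phi t Ft) in M. simpl in M. pose proof (Rle_abs x). unfold t in *. lra.
  - assert (Ex : exists T, 0 <= T /\ ~ fin T).
    { apply NNPP; intro H. apply NAll. intros t Ht. apply NNPP; intro Hf. apply H; eauto. }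
    destruct Ex as [T [HT HnT]].
    pose proof (Hmon (Fin T) Inf HT I I) as M. rewrite (not_fin T HnT) in M.
    destruct (phi Inf); simpl in M; [contradiction|auto].
Qed.

End Facts.

End P5.
Import P5.

Module P6.

Ltac nlra := repeat match goal with H : ?a <> ?b |- _ =>
  let H' := fresh in destruct (Rtotal_order a b) as [H'|[H'|H']]; [|contradiction|]; clear H end; lra.

Section Constr.
Variable phi : ER -> ER.
Hypothesis Hnn : maps_nonneg phi.
Hypothesis Hnc : ER_nonconstant phi.
Hypothesis Hcont : ER_continuous phi.
Hypothesis Hmon : ER_nondecreasing phi.
Hypothesis Hconv : ER_convex phi.
Variables t0 alpha tstar : R.
Hypothesis Ht0 : is_t0 phi t0.
Hypothesis Halpha : 0 < alpha.
Hypothesis Htstar : t0 < tstar.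
Hypothesis Hint : improper_int_finite (ratio_pow phi alpha) tstar.
Variable th : R.
Hypothesis Hth : 0 < th < 1.

Local Notation fv := (P2.fv phi).
Local Notation fin := (P2.fin phi).
Local Notation sl := (P2.sl phi).
Local Notation kf := (P3.kf th).
Local Notation jf := (P3.jf th).
Local Notation gr := (P4.gr phi th).
Local Notation fin_down := (P2.fin_down phi Hmon).
Local Notation fin_eq := (P2.fin_eq phi).
Local Notation f_nonneg := (P2.f_nonneg phi Hnn).
Local Notation sl_mul := (P2.sl_mul phi).
Local Notation sl_nonneg := (P2.sl_nonneg phi Hmon).
Local Notation sl_incr := (P2.sl_incr phi Hmon Hconv).
Local Notation gr_up := (P4.gr_up phi Hmon th Hth).
Local Notation gr_lowsplit := (P4.gr_lowsplit phi Hmon th Hth).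
Local Notation low_L := (P4.low_L phi th Hth).
Local Notation gr_conv := (P4.gr_conv phi Hmon Hconv th Hth).
Local Notation gr_nonneg := (P4.gr_nonneg phi Hmon th Hth).
Local Notation gr_le_f := (P4.gr_le_f phi Hnn Hmon th Hth).
Local Notation fin0 := (P5.fin0 phi Hnc Hmon).
Local Notation fin_open := (P5.fin_open phi Hnn Hcont).
Local Notation slopes_unbounded := (P5.slopes_unbounded phi Hnn Hnc Hcont Hmon t0 alpha tstar Ht0 Halpha Htstar Hint).
Local Notation slopes_far := (P5.slopes_far phi Hnn Hnc Hcont Hmon Hconv t0 alpha tstar Ht0 Halpha Htstar Hint).

Lemma sl_nonneg' x y : 0 <= x -> x <= y -> fin y -> 0 <= sl x y.
Proof.
  intros Hx Hxy Hy. destruct (Req_dec x y) as [E|E].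
  - subst. unfold P2.sl. rewrite !Rminus_diag. unfold Rdiv. rewrite Rmult_0_l. lra.
  - apply sl_nonneg; auto; nlra.
Qed.

Definition mmset u := fun y => y = 0 \/ exists v, 0 <= v < u /\ y = sl v u.
Definition mm u := Rsup (mmset u).
Definition jj u := jf (mm u).

Lemma mm_bound u : 0 <= u -> fin u -> bound (mmset u).
Proof.
  intros Hu Fu. destruct (fin_open u Hu Fu) as [c [Huc Fc]].
  exists (Rmax 0 (sl u c)). intros y [E|[v [Hv E]]]; subst.
  - apply Rmax_l.
  - apply Rle_trans with (sl u c); [|apply Rmax_r]. apply sl_incr; auto; lra.
Qed.

Lemma mm_ge_sl u v : 0 <= v < u -> fin u -> sl v u <= mm u.
Proof.
  intros Hv Fu. apply Rsup_ub. apply mm_bound; auto; lra. right; exists v; auto.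
Qed.

Lemma mm_nonneg u : 0 <= u -> fin u -> 0 <= mm u.
Proof. intros. apply Rsup_ub. apply mm_bound; auto. left; auto. Qed.

Lemma mm_le u t : 0 <= u -> u < t -> fin t -> mm u <= sl u t.
Proof.
  intros Hu Hut Ft. apply Rsup_le. exists 0; left; auto.
  intros y [E|[v [Hv E]]]; subst.
  - apply sl_nonneg; auto.
  - apply sl_incr; auto; lra.
Qed.

Definition A u s := fv u + jj u * (s - gr u).

Lemma support u t : 0 <= u -> 0 <= t -> fin u -> fin t -> A u (gr t) <= fv t.
Proof.
  intros Hu Ht Fu Ft. unfold A, jj.
  destruct (Rtotal_order u t) as [Hlt|[Heq|Hgt]].
  - set (s := sl u t).
    assert (Hs : 0 <= s) by (apply sl_nonneg; auto).
    pose proof (gr_up u t Hu ltac:(lra) Ft) as U. fold s in U.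
    pose proof (P4.gr_mono phi Hmon th Hth u t Hu ltac:(lra) Ft) as M.
    pose proof (jf_mono th Hth _ _ (mm_le u t Hu Hlt Ft)) as J. fold s in J.
    pose proof (jf_ge1 th Hth (mm u)) as J1.
    pose proof (kj th s Hs) as KJ. pose proof (sl_mul u t) as SM. fold s in SM.
    pose proof (kf_nonneg th s Hs) as KN.
    assert (jf (mm u) * (gr t - gr u) <= jf s * (gr t - gr u)) by (apply Rmult_le_compat_r; lra).
    assert (jf s * (gr t - gr u) <= jf s * ((t - u) * kf s)) by (apply Rmult_le_compat_l; lra).
    assert (jf s * ((t - u) * kf s) = (t - u) * s) by (replace (jf s * ((t - u) * kf s)) with ((t - u) * (kf s * jf s)) by ring; rewrite KJ; ring).
    lra.
  - subst. rewrite Rminus_diag, Rmult_0_r. lra.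
  - assert (Lo : gr t + (fv u - fv t) / jf (mm u) <= gr u).
    { apply gr_lowsplit; auto; try lra. intros l2 Hv.
      apply P4.low_U; auto; try lra.
      intros x y Hx Hxy Hy. apply Rle_trans with (sl x u).
      - destruct (Req_dec y u) as [E|E]; [subst; lra|]. apply sl_incr; auto; nlra.
      - apply mm_ge_sl; auto; lra. }
    pose proof (jf_ge1 th Hth (mm u)) as J1.
    assert ((fv u - fv t) <= jf (mm u) * (gr u - gr t)).
    { apply (Rmult_le_reg_r (/ jf (mm u))). apply Rinv_0_lt_compat; lra.
      replace (jf (mm u) * (gr u - gr t) * / jf (mm u)) with (gr u - gr t) by (field; lra).
      unfold Rdiv in Lo. lra. }
    nra.
Qed.

Definition Eset s := fun y => exists u, 0 <= u /\ fin u /\ y = A u s.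

Definition psi (p : ER) : ER :=
  match p with
  | Inf => Inf
  | Fin s => if excluded_middle_informative (bound (Eset s)) then Fin (Rsup (Eset s)) else Inf
  end.

Definition phit (p : ER) : ER :=
  match p with
  | Inf => Inf
  | Fin t => match phi (Fin t) with Fin _ => Fin (gr t) | Inf => Inf end
  end.

Lemma Eset_ne s : exists y, Eset s y.
Proof. exists (A 0 s). exists 0. split; [lra|split; [exact fin0|auto]]. Qed.

Lemma jj_pos u : 1 <= jj u.
Proof. apply jf_ge1; auto. Qed.

Lemma psi_g t : 0 <= t -> fin t -> psi (Fin (gr t)) = Fin (fv t).
Proof.
  intros Ht Ft. simpl.
  assert (Hb : bound (Eset (gr t))).
  { exists (fv t). intros y [u [Hu [Fu E]]]. subst. apply support; auto. }
  destruct (excluded_middle_informative (bound (Eset (gr t)))) as [_|N]; [|contradiction].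
  f_equal. apply Rle_antisym.
  - apply Rsup_le. apply Eset_ne. intros y [u [Hu [Fu E]]]; subst; apply support; auto.
  - apply Rsup_ub; auto. exists t. repeat split; auto. unfold A. rewrite Rminus_diag. ring.
Qed.

Lemma psi_nonneg : maps_nonneg psi.
Proof.
  intros [s|] Hs; simpl; auto. simpl in Hs.
  destruct (excluded_middle_informative (bound (Eset s))) as [Hb|_]; simpl; auto.
  apply Rle_trans with (A 0 s).
  - unfold A. rewrite (P4.gr_zero phi th), Rminus_0_r.
    pose proof (f_nonneg 0 ltac:(lra)). pose proof (jj_pos 0). nra.
  - apply Rsup_ub; auto. exists 0. split; [lra|split; [exact fin0|auto]].
Qed.

Lemma psi_mono : ER_nondecreasing psi.
Proof.
  intros [x|] [y|] Hx Hy Hxy; simpl in Hx, Hy, Hxy; try contradiction;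
    [| destruct (psi (Fin x)); simpl; auto | simpl; auto].
  unfold psi at 2.
  destruct (excluded_middle_informative (bound (Eset y))) as [Hb|Hnb];
    [|destruct (psi (Fin x)); simpl; auto].
  assert (Hbx : bound (Eset x)).
  { exists (Rsup (Eset y)). intros z [u [Hu [Fu E]]]; subst.
    apply Rle_trans with (A u y).
    - unfold A. pose proof (jj_pos u). nra.
    - apply Rsup_ub; auto. exists u; auto. }
  unfold psi. destruct (excluded_middle_informative (bound (Eset x))) as [_|N]; [|contradiction].
  simpl. apply Rsup_le. apply Eset_ne. intros z [u [Hu [Fu E]]]; subst.
  apply Rle_trans with (A u y).
  - unfold A. pose proof (jj_pos u). nra.
  - apply Rsup_ub; auto. exists u; auto.
Qed.

Lemma psi_conv : ER_convex psi.
Proof.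
  intros [x|] [y|] l Hx Hy Hl; unfold ERcomb; simpl ERscale; simpl ERadd;
    [| destruct (psi (Fin x)); simpl; auto | simpl; auto | simpl; auto].
  set (w := l * x + (1 - l) * y).
  assert (Key : forall u, A u w = l * A u x + (1 - l) * A u y) by (intros; unfold A, w; ring).
  unfold psi.
  destruct (excluded_middle_informative (bound (Eset x))) as [Bx|Nx];
    [|destruct (excluded_middle_informative (bound (Eset w))); simpl; auto].
  destruct (excluded_middle_informative (bound (Eset y))) as [By|Ny];
    [|destruct (excluded_middle_informative (bound (Eset w))); simpl; auto].
  assert (Bnd : forall z, Eset w z -> z <= l * Rsup (Eset x) + (1 - l) * Rsup (Eset y)).
  { intros z [u [Hu [Fu E]]]; subst. rewrite Key.
    assert (A u x <= Rsup (Eset x)) by (apply Rsup_ub; auto; exists u; auto).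
    assert (A u y <= Rsup (Eset y)) by (apply Rsup_ub; auto; exists u; auto).
    nra. }
  assert (Bw : bound (Eset w)) by (exists (l * Rsup (Eset x) + (1 - l) * Rsup (Eset y)); exact Bnd).
  destruct (excluded_middle_informative (bound (Eset w))) as [_|N]; [|contradiction].
  simpl. apply Rsup_le; auto. apply Eset_ne.
  all: repeat destruct (excluded_middle_informative _); simpl; auto.
Qed.

Lemma psi_super : ER_superlinear psi.
Proof.
  intros M. set (M1 := Rmax M 1).
  assert (HM1 : 1 <= M1) by apply Rmax_r. assert (HM : M <= M1) by apply Rmax_l.
  destruct (jf_unbounded th Hth (2 * M1)) as [B [HB1 HB]].
  destruct (slopes_unbounded B) as [u [Hu [Fu Hs]]].
  assert (HslB : B <= sl 0 u).
  { pose proof (sl_mul 0 u). apply (Rmult_le_reg_l u); [lra|]. rewrite Rminus_0_r in H. lra. }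
  assert (Hj : 2 * M1 <= jj u).
  { unfold jj. apply Rle_trans with (jf B); auto. apply jf_mono; auto.
    apply Rle_trans with (sl 0 u); auto. apply mm_ge_sl; auto; lra. }
  pose proof (gr_nonneg u ltac:(lra) Fu) as Gu.
  exists (Rmax 1 (2 * gr u)). split. pose proof (Rmax_l 1 (2 * gr u)); lra.
  intros s Hs'. pose proof (Rmax_l 1 (2 * gr u)). pose proof (Rmax_r 1 (2 * gr u)).
  simpl. destruct (excluded_middle_informative (bound (Eset s))) as [Hb|]; simpl; auto.
  apply Rle_trans with (A u s).
  - unfold A. pose proof (f_nonneg u ltac:(lra)).
    assert (2 * M1 * (s - gr u) <= jj u * (s - gr u)) by (apply Rmult_le_compat_r; lra).
    assert (M * s <= M1 * s) by (apply Rmult_le_compat_r; lra).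
    nra.
  - apply Rsup_ub; auto. exists u; repeat split; auto; lra.
Qed.

Lemma phit_fin t : 0 <= t -> fin t -> phit (Fin t) = Fin (gr t).
Proof. intros Ht Ft. simpl. rewrite (fin_eq t Ft). auto. Qed.

Lemma phit_nfin t : ~ fin t -> phit (Fin t) = Inf.
Proof. intros N. simpl. rewrite (P5.not_fin phi t N). auto. Qed.

Lemma phit_nonneg : maps_nonneg phit.
Proof.
  intros [t|] Ht; simpl in *; auto. destruct (classic (fin t)) as [F|N].
  - rewrite (fin_eq t F). simpl. apply gr_nonneg; auto.
  - rewrite (P5.not_fin phi t N). simpl; auto.
Qed.

Lemma phit_mono : ER_nondecreasing phit.
Proof.
  intros [x|] [y|] Hx Hy Hxy; simpl in Hx, Hy, Hxy; try contradiction.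
  - destruct (classic (fin y)) as [Fy|Ny].
    + assert (Fx : fin x) by (apply fin_down with y; auto).
      rewrite (phit_fin x Hx Fx), (phit_fin y Hy Fy). simpl.
      apply P4.gr_mono; auto.
    + rewrite (phit_nfin y Ny). destruct (phit (Fin x)); simpl; auto.
  - destruct (phit (Fin x)); simpl; auto.
  - simpl; auto.
Qed.

Lemma gr_comb x y l : 0 <= x -> 0 <= y -> fin x -> fin y -> 0 < l < 1 ->
  gr (l * x + (1 - l) * y) <= l * gr x + (1 - l) * gr y.
Proof.
  intros Hx Hy Fx Fy Hl.
  destruct (Rtotal_order x y) as [Hlt|[Heq|Hgt]].
  - pose proof (gr_conv x (l * x + (1 - l) * y) y Hx ltac:(nra) ltac:(nra) Fy) as C.
    replace (y - (l * x + (1 - l) * y)) with (l * (y - x)) in C by ring.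
    replace (l * x + (1 - l) * y - x) with ((1 - l) * (y - x)) in C by ring.
    apply (Rmult_le_reg_l (y - x)); [lra|]. nra.
  - subst. replace (l * y + (1 - l) * y) with y by ring. lra.
  - pose proof (gr_conv y (l * x + (1 - l) * y) x Hy ltac:(nra) ltac:(nra) Fx) as C.
    replace (x - (l * x + (1 - l) * y)) with ((1 - l) * (x - y)) in C by ring.
    replace (l * x + (1 - l) * y - y) with (l * (x - y)) in C by ring.
    apply (Rmult_le_reg_l (x - y)); [lra|]. nra.
Qed.

Lemma phit_conv : ER_convex phit.
Proof.
  intros [x|] [y|] l Hx Hy Hl; unfold ERcomb; cbn -[phit].
  - simpl in Hx, Hy.
    destruct (classic (fin x)) as [Fx|Nx]; [|rewrite (phit_nfin x Nx);
       destruct (phit (Fin (l * x + (1 - l) * y))); simpl; auto].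
    destruct (classic (fin y)) as [Fy|Ny]; [|rewrite (phit_nfin y Ny);
       destruct (phit (Fin (l * x + (1 - l) * y))); destruct (phit (Fin x)); simpl; auto].
    assert (Fw : fin (l * x + (1 - l) * y)).
    { apply fin_down with (Rmax x y); try nra.
      - assert (l * x <= l * Rmax x y) by (apply Rmult_le_compat_l; [lra|apply Rmax_l]).
        assert ((1 - l) * y <= (1 - l) * Rmax x y) by (apply Rmult_le_compat_l; [lra|apply Rmax_r]).
        lra.
      - unfold Rmax; destruct (Rle_dec x y); auto. }
    assert (Hw : 0 <= l * x + (1 - l) * y).
    { destruct Hl. apply Rplus_le_le_0_compat; apply Rmult_le_pos; lra. }
    rewrite (phit_fin x Hx Fx), (phit_fin y Hy Fy), (phit_fin _ Hw Fw). simpl.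
    apply gr_comb; auto.
  - destruct (phit (Fin x)); simpl; auto.
  - simpl; auto.
  - simpl; auto.
Qed.

Lemma gr_lowL s t : 0 < s -> s <= t -> fin t -> gr s + (t - s) * kf (sl 0 s) <= gr t.
Proof.
  intros Hs Hst Ft. apply gr_lowsplit; auto; try lra. intros l2 Hv.
  assert (Fs : fin s) by (apply fin_down with t; auto; lra).
  apply low_L; auto. apply sl_nonneg; auto; lra.
  intros p q Hp Hpq Hq. apply sl_incr; auto; try lra. apply fin_down with t; auto; lra.
Qed.

Lemma phit_super : ER_superlinear phit.
Proof.
  intros M. set (M1 := Rmax M 1).
  assert (HM1 : 1 <= M1) by apply Rmax_r. assert (HM : M <= M1) by apply Rmax_l.
  destruct (kf_unbounded th Hth (2 * M1)) as [B [HB1 HB]].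
  destruct (slopes_far B) as [u [Hu [Fu Hs]]].
  exists (2 * u). split; [lra|]. intros t Ht.
  destruct (classic (fin t)) as [Ft|Nt]; [|rewrite (phit_nfin t Nt); simpl; auto].
  rewrite (phit_fin t ltac:(lra) Ft). simpl.
  set (s := t / 2).
  assert (Fs : fin s) by (apply fin_down with t; unfold s; auto; lra).
  specialize (Hs s ltac:(unfold s; lra) Fs).
  assert (HslB : B <= sl 0 s).
  { pose proof (sl_mul 0 s). apply (Rmult_le_reg_l s); [unfold s; lra|]. rewrite Rminus_0_r in H. lra. }
  pose proof (gr_lowL s t ltac:(unfold s; lra) ltac:(unfold s; lra) Ft) as L.
  pose proof (gr_nonneg s ltac:(unfold s; lra) Fs).
  pose proof (kf_mono th Hth B (sl 0 s) ltac:(lra) HslB).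
  assert (t - s = t / 2) by (unfold s; field).
  rewrite H1 in L.
  assert (t / 2 * (2 * M1) <= t / 2 * kf (sl 0 s)) by (apply Rmult_le_compat_l; lra).
  assert (M * t <= M1 * t) by (apply Rmult_le_compat_r; lra).
  lra.
Qed.

Lemma phit_le p : ERnonneg p -> ERle (phit p) (phi p).
Proof.
  destruct p as [t|]; intros Hp; simpl in Hp.
  - destruct (classic (fin t)) as [Ft|Nt].
    + rewrite (phit_fin t Hp Ft), (fin_eq t Ft). simpl. apply gr_le_f; auto.
    + rewrite (phit_nfin t Nt), (P5.not_fin phi t Nt). simpl; auto.
  - simpl. rewrite (P5.phi_Inf phi Hnn Hnc Hcont Hmon Hconv t0 alpha tstar Ht0 Halpha Htstar Hint).
    simpl; auto.
Qed.

Lemma compose p : ERnonneg p -> phi p = psi (phit p).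
Proof.
  destruct p as [t|]; intros Hp; simpl in Hp.
  - destruct (classic (fin t)) as [Ft|Nt].
    + rewrite (phit_fin t Hp Ft), (psi_g t Hp Ft), (fin_eq t Ft). auto.
    + rewrite (phit_nfin t Nt), (P5.not_fin phi t Nt). auto.
  - simpl. apply (P5.phi_Inf phi Hnn Hnc Hcont Hmon Hconv t0 alpha tstar Ht0 Halpha Htstar Hint).
Qed.

End Constr.

End P6.
Import P6.

Module P7.
Import Coquelicot.Coquelicot.

Ltac nlra := repeat match goal with H : ?a <> ?b |- _ =>
  let H' := fresh in destruct (Rtotal_order a b) as [H'|[H'|H']]; [|contradiction|]; clear H end; lra.

Lemma Rpower_inv_base y e : 0 < y -> Rpower (/ y) e = / Rpower y e.
Proof.
  intros Hy. unfold Rpower. rewrite ln_Rinv by auto. rewrite <- exp_Ropp. f_equal. ring.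
Qed.

Lemma kf_ge1 th m : 1 <= m -> kf th m = Rpower m th.
Proof.
  intros Hm. unfold kf. destruct (Rle_dec m 1); auto.
  replace m with 1 by lra. rewrite Rpower_1_base. auto.
Qed.

Lemma ratio_nonneg g a t : 0 <= ratio_pow g a t.
Proof. unfold ratio_pow. destruct (g (Fin t)); [left; apply Rpower_pos|lra]. Qed.

Section Integral.
Variable phi : ER -> ER.
Hypothesis Hnn : maps_nonneg phi.
Hypothesis Hnc : ER_nonconstant phi.
Hypothesis Hcont : ER_continuous phi.
Hypothesis Hmon : ER_nondecreasing phi.
Hypothesis Hconv : ER_convex phi.
Variables t0 alpha tstar alpha' : R.
Hypothesis Ht0 : is_t0 phi t0.
Hypothesis Halpha : 0 < alpha.
Hypothesis Htstar : t0 < tstar.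
Hypothesis Hint : improper_int_finite (ratio_pow phi alpha) tstar.
Hypothesis Halpha' : alpha < alpha'.

Definition th := alpha / alpha'.
Lemma Hth : 0 < th < 1.
Proof.
  unfold th. split. apply Rdiv_lt_0_compat; lra.
  apply (Rmult_lt_reg_r alpha'); [lra|]. unfold Rdiv. rewrite Rmult_assoc, Rinv_l; lra.
Qed.

Local Notation fv := (P2.fv phi).
Local Notation fin := (P2.fin phi).
Local Notation sl := (P2.sl phi).
Local Notation kf := (P3.kf th).
Local Notation gr := (P4.gr phi th).
Local Notation phit := (P6.phit phi th).
Local Notation fin_down := (P2.fin_down phi Hmon).
Local Notation fin_eq := (P2.fin_eq phi).
Local Notation f_nonneg := (P2.f_nonneg phi Hnn).
Local Notation sl_mul := (P2.sl_mul phi).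

Lemma main_integral : exists tstar', t0 < tstar' /\ improper_int_finite (ratio_pow phit alpha') tstar'.
Proof.
  pose proof (P5.tstar_pos phi t0 tstar Ht0 Htstar) as Htp.
  pose proof (f_nonneg 0 ltac:(lra)) as F0.
  destruct (P5.slopes_far phi Hnn Hnc Hcont Hmon Hconv t0 alpha tstar Ht0 Halpha Htstar Hint
              (1 + fv 0)) as [u [Hu [Fu Hs]]].
  set (m := Rmax (Rmax u tstar) (fv 0 + 1)).
  assert (Hm1 : u <= m) by (unfold m; eapply Rle_trans; [apply Rmax_l|apply Rmax_l]).
  assert (Hm2 : tstar <= m) by (unfold m; eapply Rle_trans; [apply Rmax_r|apply Rmax_l]).
  assert (Hm3 : fv 0 + 1 <= m) by (unfold m; apply Rmax_r).
  set (ts := 2 * m).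
  pose proof Hth as HTH.
  assert (Key : forall t, ts <= t -> fin t ->
     fin (t / 2) /\ 1 <= sl 0 (t / 2) /\ t / 2 * Rpower (sl 0 (t / 2)) th <= gr t /\
     fv (t / 2) <= 2 * (t / 2) * sl 0 (t / 2) /\ 0 < fv (t / 2)).
  { intros t Ht Ft. set (s := t / 2).
    assert (Hs1 : m <= s) by (unfold s, ts in *; lra).
    assert (Fs : fin s) by (apply fin_down with t; auto; unfold s, ts in *; lra).
    pose proof (Hs s ltac:(lra) Fs) as Hss.
    pose proof (sl_mul 0 s) as SM. rewrite Rminus_0_r in SM.
    assert (Hsig : 1 + fv 0 <= sl 0 s) by (apply (Rmult_le_reg_l s); lra).
    assert (Hsig1 : 1 <= sl 0 s) by lra.
    pose proof (P6.gr_lowL phi Hmon Hconv th Hth s t ltac:(lra) ltac:(unfold s, ts in *; lra) Ft) as L.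
    pose proof (P4.gr_nonneg phi Hmon th Hth s ltac:(lra) Fs) as G.
    rewrite (kf_ge1 th _ Hsig1) in L.
    replace (t - s) with s in L by (unfold s; field).
    repeat split; auto; try lra.
    - assert (s <= s * sl 0 s) by nra. lra.
    - assert (s <= s * sl 0 s) by nra. lra. }
  set (C := Rpower 2 (alpha' + alpha)).
  set (G := ratio_pow phit alpha').
  set (F := ratio_pow phi alpha).
  assert (Hgpos : forall t, ts <= t -> fin t -> 0 < gr t).
  { intros t Ht Ft. destruct (Key t Ht Ft) as [_ [H1 [H2 _]]].
    pose proof (Rpower_pos (sl 0 (t / 2)) th). assert (0 < t / 2 * Rpower (sl 0 (t / 2)) th).
    apply Rmult_lt_0_compat; auto. unfold ts in *; lra. lra. }
  assert (HGfin : forall t, ts <= t -> fin t -> G t = Rpower (t / gr t) alpha').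
  { intros t Ht Ft. unfold G, ratio_pow. rewrite (P6.phit_fin phi th t ltac:(unfold ts in *; lra) Ft). auto. }
  assert (HGnfin : forall t, ~ fin t -> G t = 0).
  { intros t Nt. unfold G, ratio_pow. rewrite (P6.phit_nfin phi th t Nt). auto. }
  assert (Pt : forall t, ts <= t -> G t <= C * F (t / 2)).
  { intros t Ht. assert (HC : 0 < C) by apply Rpower_pos.
    destruct (classic (fin t)) as [Ft|Nt].
    2: { rewrite (HGnfin t Nt). pose proof (ratio_nonneg phi alpha (t / 2)). fold F in H. nra. }
    destruct (Key t Ht Ft) as [Fs [H1 [H2 [H3 H4]]]].
    set (s := t / 2) in *. set (sg := sl 0 s) in *.
    assert (Hspos : 0 < s) by (unfold s, ts in *; lra).
    set (X := s / fv s).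
    assert (HX : 0 < X) by (unfold X; apply Rdiv_lt_0_compat; lra).
    assert (Hsg : / (2 * X) <= sg).
    { unfold X. rewrite Rinv_mult. rewrite Rinv_div.
      apply (Rmult_le_reg_l (2 * s)); [lra|]. replace (2 * s * (/ 2 * (fv s / s))) with (fv s) by (field; lra).
      lra. }
    assert (P1 : Rpower (/ (2 * X)) th <= Rpower sg th).
    { apply Rle_Rpower_l; [lra|]. split; auto. apply Rinv_0_lt_compat; lra. }
    rewrite Rpower_inv_base in P1 by lra.
    pose proof (Rpower_pos (2 * X) th) as P2p. pose proof (Rpower_pos sg th) as P3p.
    pose proof (Hgpos t Ht Ft) as Gp.
    assert (Q : t / gr t <= 2 * Rpower (2 * X) th).
    { apply Rle_trans with (t / (s * Rpower sg th)).
      - apply div_le_div; try nra. apply Rmult_le_compat_l; [unfold ts in *; lra|]. exact H2.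
      - replace (t / (s * Rpower sg th)) with (2 / Rpower sg th) by (unfold s; field; unfold ts in *; split; lra).
        apply (Rmult_le_reg_r (Rpower sg th)); auto.
        replace (2 / Rpower sg th * Rpower sg th) with 2 by (field; lra).
        apply (Rmult_le_reg_r (/ Rpower (2 * X) th)). apply Rinv_0_lt_compat; auto.
        replace (2 * Rpower (2 * X) th * Rpower sg th * / Rpower (2 * X) th) with (2 * Rpower sg th)
          by (field; lra). nra. }
    rewrite (HGfin t Ht Ft).
    apply Rle_trans with (Rpower (2 * Rpower (2 * X) th) alpha').
    { apply Rle_Rpower_l; [lra|]. split; auto. apply Rdiv_lt_0_compat; auto. unfold ts in *; lra. }
    rewrite <- Rpower_mult_distr by (auto; lra).
    rewrite Rpower_mult. replace (th * alpha') with alpha by (unfold th; field; lra).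
    rewrite <- Rpower_mult_distr by lra.
    unfold C. rewrite Rpower_plus.
    unfold F, ratio_pow. rewrite (fin_eq s Fs). fold X. right; ring. }
  assert (Mono : forall x y, ts <= x -> x <= y -> G y <= G x).
  { intros x y Hx Hxy. destruct (classic (fin y)) as [Fy|Ny].
    2: { rewrite (HGnfin y Ny). apply ratio_nonneg. }
    assert (Fx : fin x) by (apply fin_down with y; auto; unfold ts in *; lra).
    rewrite (HGfin x Hx Fx), (HGfin y ltac:(lra) Fy).
    pose proof (Hgpos x Hx Fx). pose proof (Hgpos y ltac:(lra) Fy).
    apply Rle_Rpower_l; [lra|]. split. apply Rdiv_lt_0_compat; auto; unfold ts in *; lra.
    assert (gr x * y <= gr y * x).
    { destruct (Req_dec x y) as [E|E]; [subst; lra|].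
      set (l := 1 - x / y).
      assert (Hl : 0 < l < 1).
      { unfold l. assert (0 < x / y < 1); [|lra]. split. apply Rdiv_lt_0_compat; unfold ts in *; lra.
        apply (Rmult_lt_reg_r y); [unfold ts in *; lra|]. unfold Rdiv. rewrite Rmult_assoc, Rinv_l by (unfold ts in *; lra). rewrite Rmult_1_r. unfold ts in *; nlra. }
      pose proof (P6.gr_comb phi Hmon Hconv th Hth 0 y l ltac:(lra) ltac:(unfold ts in *; lra)
          (P5.fin0 phi Hnc Hmon) Fy Hl) as GC.
      replace (l * 0 + (1 - l) * y) with x in GC by (unfold l; field; unfold ts in *; lra).
      rewrite P4.gr_zero in GC. replace (1 - l) with (x / y) in GC by (unfold l; ring).
      apply (Rmult_le_reg_r (/ y)). apply Rinv_0_lt_compat; unfold ts in *; lra.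
      replace (gr x * y * / y) with (gr x) by (field; unfold ts in *; lra).
      unfold Rdiv in GC. lra. }
    apply div_le_div; auto; lra. }
  exists ts. split; [unfold ts; lra|]. split.
  - intros b Hb. constructor. apply PMono.mono_integrable; [lra|].
    intros x y Hx Hxy Hy. apply Mono; auto.
  - destruct Hint as [Hi [M HM]].
    exists (2 * C * M). intros b pr Hb.
    rewrite <- RInt_Reals.
    assert (HexG : ex_RInt G ts b) by (apply ex_RInt_Reals_1; exact pr).
    assert (Hb2 : tstar <= b / 2) by (unfold ts in *; lra).
    destruct (Hi (b / 2) Hb2) as [prF].
    assert (HexF : ex_RInt F tstar (b / 2)) by (apply ex_RInt_Reals_1; exact prF).
    assert (HexF2 : ex_RInt F (/ 2 * ts + 0) (/ 2 * b + 0)).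
    { apply (ex_RInt_Chasles_2 (V := R_CompleteNormedModule) F tstar). unfold ts in *; lra.
      replace (/ 2 * b + 0) with (b / 2) by field. auto. }
    pose proof (ex_RInt_comp_lin (V := R_CompleteNormedModule) F (/ 2) 0 ts b HexF2) as HexH.
    pose proof (RInt_comp_lin (V := R_CompleteNormedModule) F (/ 2) 0 ts b HexF2) as EH.
    set (H := fun y : R => scal (/ 2) (F (/ 2 * y + 0))) in *.
    apply Rle_trans with (RInt (fun y => scal (2 * C) (H y)) ts b).
    { apply RInt_le; auto. apply (ex_RInt_scal (V := R_CompleteNormedModule)); auto.
      intros x Hx. unfold H. change (scal (2 * C) (scal (/ 2) (F (/ 2 * x + 0)))) with
        ((2 * C) * (/ 2 * (F (/ 2 * x + 0)))).
      replace (/ 2 * x + 0) with (x / 2) by field.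
      replace (2 * C * (/ 2 * F (x / 2))) with (C * F (x / 2)) by field.
      apply Pt; lra. }
    rewrite (RInt_scal (V := R_CompleteNormedModule)) by auto. replace (RInt H ts b) with (RInt F (/ 2 * ts + 0) (/ 2 * b + 0)) by (symmetry; unfold H; exact EH).
    change (scal (2 * C) ?z) with (2 * C * z).
    assert (HexF1 : ex_RInt F tstar (/ 2 * ts + 0)).
    { apply (ex_RInt_Chasles_1 (V := R_CompleteNormedModule) F _ _ (b / 2)). unfold ts in *; lra. auto. }
    pose proof (RInt_Chasles (V := R_CompleteNormedModule) F tstar (/ 2 * ts + 0) (/ 2 * b + 0) HexF1 HexF2) as Ch.
    change (plus ?a ?c) with (a + c) in Ch.
    replace (/ 2 * b + 0) with (b / 2) in Ch by field.
    rewrite (RInt_Reals F tstar (b / 2) prF) in Ch.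
    specialize (HM (b / 2) prF Hb2).
    assert (0 <= RInt F tstar (/ 2 * ts + 0)).
    { apply RInt_ge_0; auto. unfold ts in *; lra. intros; apply ratio_nonneg. }
    assert (HC : 0 < C) by apply Rpower_pos.
    replace (/ 2 * b + 0) with (b / 2) by field.
    assert (Ch' : RInt F tstar (/ 2 * ts + 0) + RInt F (/ 2 * ts + 0) (b / 2) = RiemannInt prF) by exact Ch.
    assert (RInt F (/ 2 * ts + 0) (b / 2) <= M) by lra.
    nra.
Qed.

End Integral.

End P7.
Import P7.


Theorem lemma2p1 (phi : ER -> ER) (t0 alpha tstar alpha' : R) :
  maps_nonneg phi ->
  ER_nonconstant phi ->
  ER_continuous phi ->
  ER_nondecreasing phi ->
  ER_convex phi ->
  is_t0 phi t0 ->
  0 < alpha ->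
  t0 < tstar ->
  improper_int_finite (ratio_pow phi alpha) tstar ->
  alpha < alpha' ->
  exists psi phit : ER -> ER,
    strictly_convex psi /\ strictly_convex phit /\
    (forall p, ERnonneg p -> phi p = psi (phit p)) /\
    (forall p, ERnonneg p -> ERle (phit p) (phi p)) /\
    exists tstar', t0 < tstar' /\ improper_int_finite (ratio_pow phit alpha') tstar'.
Proof.
  intros Hnn Hnc Hcont Hmon Hconv Ht0 Halpha Htstar Hint Halpha'.
  pose proof (P7.Hth alpha alpha' Halpha Halpha') as HT.
  exists (P6.psi phi (P7.th alpha alpha')), (P6.phit phi (P7.th alpha alpha')).
  split; [|split; [|split; [|split]]].
  - split; [|split; [|split]].
    + exact (P6.psi_nonneg phi Hnn Hnc Hmon _ HT).
    + exact (P6.psi_mono phi Hnc Hmon _ HT).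
    + exact (P6.psi_conv phi Hnc Hmon _).
    + exact (P6.psi_super phi Hnn Hnc Hcont Hmon Hconv t0 alpha tstar Ht0 Halpha Htstar Hint _ HT).
  - split; [|split; [|split]].
    + exact (P6.phit_nonneg phi Hmon _ HT).
    + exact (P6.phit_mono phi Hmon _ HT).
    + exact (P6.phit_conv phi Hmon Hconv _ HT).
    + exact (P6.phit_super phi Hnn Hnc Hcont Hmon Hconv t0 alpha tstar Ht0 Halpha Htstar Hint _ HT).
  - exact (P6.compose phi Hnn Hnc Hcont Hmon Hconv t0 alpha tstar Ht0 Halpha Htstar Hint _ HT).
  - exact (P6.phit_le phi Hnn Hnc Hcont Hmon Hconv t0 alpha tstar Ht0 Halpha Htstar Hint _ HT).
  - exact (P7.main_integral phi Hnn Hnc Hcont Hmon Hconv t0 alpha tstar alpha' Ht0 Halpha Htstar Hint Halpha').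
Qed.
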